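(* Let $R$ be a finite commutative ring with unity such that $\Gamma_E(R)$ is a fan graph with at least four vertices. Then $R$ is a local ring.
   Context: For $x,y\in R$ write $x\sim y$ iff $\operatorname{ann}(x)=\operatorname{ann}(y)$; $[x]$ denotes the equivalence class of $x$. Let $Z^*(R)$ be the set of nonzero zero divisors of $R$. The graph $\Gamma_E(R)$ is the simple graph whose vertices are the classes $[x]$ with $x\in Z^*(R)$, two distinct vertices $[x],[y]$ being adjacent iff $xy=0$. A fan graph is a complete bipartite graph $K_{n,1}$ with $n\in\mathbb N\cup\{\infty\}$. *)

(* Defs.v *)
From mathcomp Require Import all_boot all_algebra.
Set Implicit Arguments. Unset Strict Implicit. Unset Printing Implicit Defensive.
Import GRing.Theory.
Local Open Scope ring_scope.

Definition ann (R : finComNzRingType) (x : R) : {set R} := [set y | x * y == 0].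

Definition zdivs (R : finComNzRingType) : {set R} :=
  [set x : R | (x != 0) && [exists y : R, (y != 0) && (x * y == 0)]].

Definition eclass (R : finComNzRingType) (x : R) : {set R} :=
  [set y : R | ann y == ann x].

Definition GammaE_V (R : finComNzRingType) : {set {set R}} :=
  [set eclass x | x in zdivs R].

(* Adjacency: distinct vertices [x],[y] adjacent iff xy = 0
   (independent of the representatives). *)
Definition GammaE_adj (R : finComNzRingType) (C D : {set R}) : bool :=
  (C != D) && [exists x in C, exists y in D, x * y == 0].

(* Gamma_E(R) is a fan graph K_{n,1}: some vertex c (the centre) such that two
   distinct vertices are adjacent iff one of them is c. *)
Definition is_fan_graph (R : finComNzRingType) : Prop :=
  exists2 c, c \in GammaE_V R &
    forall u v, u \in GammaE_V R -> v \in GammaE_V R -> u != v ->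
      GammaE_adj u v = (u == c) || (v == c).

Definition is_ideal (R : finComNzRingType) (I : {set R}) : bool :=
  [&& (0 : R) \in I,
      [forall x in I, forall y in I, x + y \in I] &
      [forall r : R, forall x in I, r * x \in I]].

Definition is_maximal_ideal (R : finComNzRingType) (M : {set R}) : bool :=
  [&& is_ideal M, M != [set: R] &
      [forall J : {set R}, (is_ideal J && (M \subset J)) ==> (J == M) || (J == [set: R])]].

Definition is_local_ring (R : finComNzRingType) : Prop :=
  exists M : {set R}, is_maximal_ideal M /\
    forall N : {set R}, is_maximal_ideal N -> N = M.

(* Main.v *)
Require Import Defs.
From mathcomp Require Import all_boot all_algebra.
From mathcomp Require Import zify.
Set Implicit Arguments. Unset Strict Implicit. Unset Printing Implicit Defensive.
Import GRing.Theory.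
Local Open Scope ring_scope.

Section Aux.
Variable R : finComNzRingType.

Lemma idem_pow (x : R) : exists2 n, (0 < n)%N & x ^+ n * x ^+ n = x ^+ n.
Proof.
pose f := fun i : 'I_(#|R|.+1) => x ^+ i.
have : [exists i, exists j, (i != j) && (f i == f j)].
  case: (boolP [exists i, exists j, (i != j) && (f i == f j)]) => // Hn.
  exfalso.
  have injf : injective f.
    move=> i j Hij; case: (eqVneq i j) => // ne; exfalso; move/negP: Hn; apply.
    apply/existsP; exists i; apply/existsP; exists j; by rewrite ne Hij eqxx.
  by move: (leq_card f injf); rewrite card_ord ltnn.
move=> /existsP[i0 /existsP[j0 /andP[ne /eqP Hf]]].
have [i [j [lij Hij]]] : exists i j : nat, (i < j)%N /\ x ^+ i = x ^+ j.
  rewrite /f in Hf; case: (ltngtP i0 j0) => H.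
  - by exists i0, j0.
  - by exists j0, i0.
  - by move: ne; rewrite (val_inj H) eqxx.
set p := (j - i)%N.
have pP : (0 < p)%N by rewrite subn_gt0.
have step : forall t, (i <= t)%N -> x ^+ (t + p) = x ^+ t.
  move=> t ht.
  have -> : (t + p = (t - i) + j)%N by rewrite /p; lia.
  by rewrite exprD -Hij -exprD subnK.
have stepk : forall k t, (i <= t)%N -> x ^+ (t + k * p) = x ^+ t.
  elim=> [|k IH] t ht; first by rewrite mul0n addn0.
  rewrite mulSn addnA IH ?step //; lia.
exists (i.+1 * p)%N; first by rewrite muln_gt0.
rewrite -exprD stepk //; rewrite mulSn; apply: leq_trans (leq_addl _ _); by rewrite leq_pmulr.
Qed.

Definition isu (x : R) := [exists y, x * y == 1].

Lemma nonunit_sum (x y : R) :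
  (forall e : R, e * e = e -> e = 0 \/ e = 1) ->
  ~~ isu x -> ~~ isu y -> ~~ isu (x + y).
Proof.
move=> Hid Hx Hy; apply/negP => /existsP[v /eqP Hv].
set x' := x * v.
have Hx' : ~~ isu x'.
  apply/negP => /existsP[w /eqP Hw]; move/negP: Hx; apply.
  by apply/existsP; exists (v * w); rewrite mulrA Hw.
have [n n0 Hn] := idem_pow x'.
case: (Hid _ Hn) => He.
- (* nilpotent: 1 - x' = y * v is a unit *)
  have := subrXX 1 x' n.
  rewrite expr1n He subr0 => H1.
  move/negP: Hy; apply; apply/existsP.
  exists (v * \sum_(i < n) 1 ^+ (n.-1 - i) * x' ^+ i).
  have yv : y * v = 1 - x' by rewrite /x' -Hv mulrDl addrC addKr.
  by rewrite mulrA yv -H1.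
- move/negP: Hx'; apply; apply/existsP; exists (x' ^+ n.-1).
  by rewrite -exprS prednK // He.
Qed.

Lemma ideal_full (J : {set R}) (u v : R) :
  is_ideal J -> u \in J -> u * v = 1 -> J = [set: R].
Proof.
move=> /and3P[_ _ /forallP Jm] uJ uv; apply/setP => z; rewrite inE.
have := Jm (z * v) => /forall_inP /(_ u uJ).
by rewrite -mulrA [v * u]mulrC uv mulr1.
Qed.

Lemma local_of_noidem :
  (forall e : R, e * e = e -> e = 0 \/ e = 1) -> is_local_ring R.
Proof.
move=> Hid.
set M := [set x : R | ~~ isu x].
have M1 : (1 : R) \notin M.
  by rewrite inE negbK; apply/existsP; exists 1; rewrite mulr1.
have MI : is_ideal M.
  apply/and3P; split.
  - rewrite inE; apply/negP => /existsP[y]; rewrite mul0r eq_sym oner_eq0 //.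
  - apply/forall_inP => x xM; apply/forall_inP => y yM.
    move: xM yM; rewrite !inE => xM yM; exact: (nonunit_sum Hid xM yM).
  - apply/forallP => r; apply/forall_inP => x; rewrite !inE /isu => xM.
    apply/negP => /existsP[w /eqP Hw]; move/negP: xM; apply; apply/existsP.
    by exists (r * w); rewrite mulrCA mulrA Hw.
have MT : M != [set: R].
  by apply/negP => /eqP MT; move: M1; rewrite MT inE.
have sub_M : forall J, is_ideal J -> J != [set: R] -> J \subset M.
  move=> J JI JT; apply/subsetP => u uJ; rewrite inE.
  apply/negP => /existsP[v /eqP uv]; move/negP: JT; apply; apply/eqP.
  exact: ideal_full JI uJ uv.
have Mmax : is_maximal_ideal M.
  apply/and3P; split => //.
  apply/forallP => J; apply/implyP => /andP[JI MJ].
  case: (eqVneq J [set: R]) => [->|JT]; first by apply/orP; right.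
  by rewrite eqEsubset MJ sub_M.
exists M; split => // N /and3P[NI NT /forallP Nm].
have NM := sub_M N NI NT.
move: (Nm M); rewrite MI NM /= => /orP[/eqP->|/eqP MT'] //.
by move: MT; rewrite MT' eqxx.
Qed.

Lemma eclassE (x y : R) : (eclass x == eclass y) = (ann x == ann y).
Proof.
apply/eqP/eqP => [H|H].
- have : x \in eclass y by rewrite -H inE.
  by rewrite inE => /eqP.
- by apply/setP => z; rewrite !inE H.
Qed.

Lemma zdivsP (x y : R) : x != 0 -> y != 0 -> x * y = 0 -> x \in zdivs R.
Proof.
move=> x0 y0 xy; rewrite inE x0 /=; apply/existsP; exists y; by rewrite y0 xy eqxx.
Qed.

Lemma zdivs_wit (x : R) : x \in zdivs R -> x != 0 /\ exists2 y, y != 0 & x * y = 0.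
Proof.
rewrite inE => /andP[x0 /existsP[y /andP[y0 /eqP xy]]]; split=> //; by exists y.
Qed.

Lemma annP (x y : R) : (y \in ann x) = (x * y == 0).
Proof. by rewrite inE. Qed.

Section Core.
Variable c : {set R}.
Hypothesis Hf : forall u v, u \in GammaE_V R -> v \in GammaE_V R -> u != v ->
      GammaE_adj u v = (u == c) || (v == c).

Lemma adjc (x y : R) : x \in zdivs R -> y \in zdivs R -> ann x != ann y ->
  x * y = 0 -> (eclass x == c) || (eclass y == c).
Proof.
move=> xz yz ne xy.
have ne' : eclass x != eclass y by rewrite eclassE.
rewrite -Hf ?imset_f //.
rewrite /GammaE_adj ne' /=; apply/existsP; exists x; rewrite inE eqxx /=.
apply/existsP; exists y; by rewrite inE eqxx xy eqxx.
Qed.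

Variable e : R.
Hypothesis ee : e * e = e.
Hypothesis e0 : e != 0.
Hypothesis f0 : 1 - e != 0.
Hypothesis ce : c = eclass e.

Let f := 1 - e.
Let ef : e * f = 0. Proof. by rewrite /f mulrBr mulr1 ee subrr. Qed.
Let fe : f * e = 0. Proof. by rewrite mulrC ef. Qed.
Let ff : f * f = f. Proof. by rewrite /f mulrBl mul1r ef subr0. Qed.
Let split_ (z : R) : z = e * z + f * z.
Proof. by rewrite -mulrDl /f addrC subrK mul1r. Qed.

Let annef : ann e != ann f.
Proof.
apply/negP => /eqP H.
have : f \in ann e by rewrite annP ef.
by rewrite H annP ff (negbTE f0).
Qed.

Lemma coreA (x : R) : x \in zdivs R -> ann x != ann e -> ann x != ann f ->
  e * x != 0 -> False.
Proof.
move=> xz nxe nxf ex0.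
have exz : e * x \in zdivs R by apply: (zdivsP ex0 f0); rewrite mulrC mulrA fe mul0r.
have eZ : e \in zdivs R by apply: (zdivsP e0 f0).
have fZ : f \in zdivs R by apply: (zdivsP f0 e0).
have nexf : ann (e * x) != ann f.
  apply/negP => /eqP H.
  have : e \in ann f by rewrite annP fe.
  by rewrite -H annP mulrC mulrA ee (negbTE ex0).
have exf : e * x * f = 0 by rewrite mulrAC ef mul0r.
have := adjc exz fZ nexf exf.
have -> : (eclass f == c) = false.
  by rewrite ce eclassE eq_sym (negbTE annef).
rewrite orbF ce eclassE => /eqP Hann.
have [_ [y y0 xy]] := zdivs_wit xz.
have ey0 : e * y = 0.
  have : e * y \in ann (e * x) by rewrite annP mulrACA xy mulr0.
  by rewrite Hann annP mulrA ee => /eqP.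
have yZ : y \in zdivs R by apply: (zdivsP y0 e0); rewrite mulrC ey0.
have nxy : ann x != ann y.
  apply/negP => /eqP H.
  have : e \in ann y by rewrite annP mulrC ey0.
  by rewrite -H annP mulrC (negbTE ex0).
have := adjc xz yZ nxy xy.
rewrite ce !eclassE (negbTE nxe) /= => /eqP Hy.
have : f \in ann y by rewrite Hy annP ef.
rewrite annP /f mulrBr mulr1 [y * e]mulrC ey0 subr0.
by move: yZ => /zdivs_wit[/negbTE -> _].
Qed.

Lemma core (w : R) : w \in zdivs R -> ann w != ann e -> ann w != ann f -> False.
Proof.
move=> wz nwe nwf.
case: (eqVneq (e * w) 0) => ew; last exact: (coreA wz nwe nwf ew).
have [w0 _] := zdivs_wit wz.
have sfw : ann f \subset ann w.
  apply/subsetP => z; rewrite !annP => /eqP fz.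
  by rewrite (split_ z) fz addr0 mulrA [w * e]mulrC ew mul0r.
have : ~~ (ann w \subset ann f).
  apply/negP => H; move/negP: nwf; apply; by rewrite eqEsubset H sfw.
move=> /subsetPn[y]; rewrite !annP => /eqP wy fy.
set x := e + w.
have ex : e * x = e by rewrite /x mulrDr ee ew addr0.
have x0 : x != 0 by apply/negP => /eqP x0; move: e0; rewrite -ex x0 mulr0 eqxx.
have xZ : x \in zdivs R.
  apply: (zdivsP x0 fy).
  by rewrite /x mulrDl mulrA ef mul0r add0r mulrCA wy mulr0.
apply: (coreA xZ) => //; last by rewrite ex.
- apply/negP => /eqP H.
  have : f \in ann x by rewrite H annP ef.
  rewrite annP /x mulrDl ef add0r /f mulrBr mulr1 [w * e]mulrC ew subr0.
  by rewrite (negbTE w0).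
- apply/negP => /eqP H.
  have : e \in ann x by rewrite H annP fe.
  by rewrite annP mulrC ex (negbTE e0).
Qed.

End Core.
End Aux.
Local Close Scope ring_scope.

Theorem corollary2p5 (R : finComNzRingType) :
  is_fan_graph R -> 4 <= #|GammaE_V R| -> is_local_ring R.
Proof.
Local Open Scope ring_scope.
move=> [c cV Hf] card4.
case: (boolP [exists e : R, (e * e == e) && (e != 0) && (e != 1)]); last first.
  move=> Hn; apply: local_of_noidem => e ee.
  case: (eqVneq e 0) => [->|e0]; [by left|].
  case: (eqVneq e 1) => [->|e1]; [by right|].
  exfalso; move/negP: Hn; apply; apply/existsP; exists e; by rewrite ee eqxx e0 e1.
move=> /existsP[e /andP[/andP[/eqP ee e0] e1]].
set f := 1 - e.
have f0 : f != 0 by rewrite /f subr_eq0 eq_sym.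
have ef : e * f = 0 by rewrite /f mulrBr mulr1 ee subrr.
have ff : f * f = f by rewrite /f mulrBl mul1r ef subr0.
have eZ : e \in zdivs R by apply: (zdivsP e0 f0).
have fZ : f \in zdivs R by apply: (zdivsP f0 e0); rewrite mulrC.
have annef : ann e != ann f.
  apply/negP => /eqP H.
  have : f \in ann e by rewrite annP ef.
  by rewrite H annP ff (negbTE f0).
have : ~~ (GammaE_V R \subset [set eclass e; eclass f]).
  apply/negP => /subset_leq_card; rewrite cards2.
  by move=> H; move: (leq_trans card4 H); case: (_ != _).
move=> /subsetPn[C CV]; rewrite !inE negb_or => /andP[nCe nCf].
move: CV => /imsetP[w wZ CE]; subst C.
rewrite !eclassE in nCe nCf.
have := adjc Hf eZ fZ annef ef.
case/orP => /eqP ce; symmetry in ce; exfalso.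
- exact: (core Hf ee e0 f0 ce wZ nCe nCf).
- have ff' : 1 - f = e by rewrite /f opprB addrC subrK.
  have f0' : 1 - f != 0 by rewrite ff'.
  apply: (core Hf ff f0 f0' ce wZ nCf); by rewrite ff'.
Qed.
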